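(* For any positive contraction $p$ in an operator system $\mathcal V$ we have $\begin{pmatrix} p & p \\ p & p \end{pmatrix} + J_{p \oplus q} = \begin{pmatrix} p & 0 \\ 0 & 0 \end{pmatrix} + J_{p \oplus q}$ and $\begin{pmatrix} q & q \\ q & q \end{pmatrix} + J_{p \oplus q} = \begin{pmatrix} 0 & 0 \\ 0 & q \end{pmatrix} + J_{p \oplus q}$, where $q = e - p$. Consequently the map $\pi_p$ is unital.
   Context: Let $(\mathcal V, \{C_n\}_n, e)$ be an operator system and $0 \leq p \leq e$, $q = e-p$. Define $C(p \oplus q) = \{ x \in M_2(\mathcal V) : x = x^*, \ \forall \epsilon > 0 \ \exists t > 0 \text{ such that } x + \epsilon (p \oplus q) + t (q \oplus p) \in C_2\}$ and $J_{p \oplus q} = \operatorname{span}\big(C(p\oplus q) \cap -C(p \oplus q)\big)$. The map $\pi_p: \mathcal V \to M_2(\mathcal V)/J_{p\oplus q}$ is $\pi_p(x) = \begin{pmatrix} x & x \\ x & x \end{pmatrix} + J_{p \oplus q}$, and the unit of $M_2(\mathcal V)/J_{p\oplus q}$ is $(p \oplus q) + J_{p\oplus q}$. *)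

(* Defs.v *)
From HB Require Import structures.
From mathcomp Require Import all_boot all_order all_algebra.
From mathcomp Require Import complex reals.
Set Implicit Arguments. Unset Strict Implicit. Unset Printing Implicit Defensive.
Import Order.TTheory GRing.Theory Num.Theory.
Local Open Scope ring_scope.
Local Open Scope complex_scope.

Section OpSys.
Variables (R : realType) (V : lmodType R[i]).

Definition mxZ (a : R[i]) {m n} (x : 'M[V]_(m, n)) : 'M[V]_(m, n) :=
  map_mx (fun v => a *: v) x.

Definition mxadj (star : V -> V) {n} (x : 'M[V]_n) : 'M[V]_n :=
  \matrix_(r0, c0) star (x c0 r0).

(* adjoint(alpha) x alpha for alpha in M_{n,m}(C), x in M_n(V) *)
Definition mxcong {n m} (a : 'M[R[i]]_(n, m)) (x : 'M[V]_n) : 'M[V]_m :=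
  \matrix_(r0, c0) \sum_(k < n) \sum_(l < n) ((a k r0)^* * a l c0) *: x k l.

Definition eunit (e : V) n : 'M[V]_n := \matrix_(r0, c0) if r0 == c0 then e else 0.

(* Abstract operator system (Choi--Effros): a *-vector space with a matrix
   ordering {C_n} and an Archimedean matrix order unit e. *)
Record opsys := OpSys {
  star : V -> V;
  star_add : forall x y, star (x + y) = star x + star y;
  star_scale : forall (a : R[i]) x, star (a *: x) = a^* *: star x;
  star_invol : forall x, star (star x) = x;
  cone : forall n, 'M[V]_n -> Prop;
  cone_herm : forall n (x : 'M[V]_n), cone x -> mxadj star x = x;
  cone_add : forall n (x y : 'M[V]_n), cone x -> cone y -> cone (x + y);
  cone_scale : forall n (a : R[i]) (x : 'M[V]_n), 0 <= a -> cone x -> cone (mxZ a x);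
  cone_compat : forall n m (a : 'M[R[i]]_(n, m)) (x : 'M[V]_n),
      cone x -> cone (mxcong a x);
  cone_proper : forall n (x : 'M[V]_n), cone x -> cone (- x) -> x = 0;
  ounit : V;
  ounit_herm : star ounit = ounit;
  ounit_order : forall n (x : 'M[V]_n), mxadj star x = x ->
      exists r : R[i], 0 < r /\ cone (mxZ r (eunit ounit n) + x);
  ounit_arch : forall n (x : 'M[V]_n), mxadj star x = x ->
      (forall r : R[i], 0 < r -> cone (mxZ r (eunit ounit n) + x)) -> cone x
}.

Definition mx2 (a b c d : V) : 'M[V]_2 :=
  \matrix_(r0, c0) if r0 == 0 :> 'I_2 then (if c0 == 0 :> 'I_2 then a else b)
                 else (if c0 == 0 :> 'I_2 then c else d).

Definition dsum (a b : V) : 'M[V]_2 := mx2 a 0 0 b.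

Variable S : opsys.

(* positivity in V = C_1 (V identified with M_1(V)) *)
Definition pos (x : V) : Prop := cone S (n := 1) (const_mx x).

Definition pos_contraction (p : V) : Prop := pos p /\ pos (ounit S - p).

Definition Cpq (p q : V) (x : 'M[V]_2) : Prop :=
  mxadj (star S) x = x /\
  forall eps : R[i], 0 < eps -> exists t : R[i], 0 < t /\
    cone S (x + mxZ eps (dsum p q) + mxZ t (dsum q p)).

Definition span2 (A : 'M[V]_2 -> Prop) (x : 'M[V]_2) : Prop :=
  exists (k : nat) (c : 'I_k -> R[i]) (s : 'I_k -> 'M[V]_2),
    (forall m, A (s m)) /\ x = \sum_(m < k) mxZ (c m) (s m).

Definition Jpq (p q : V) : 'M[V]_2 -> Prop :=
  span2 (fun x => Cpq p q x /\ Cpq p q (- x)).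

(* equality of cosets in M_2(V) / J *)
Definition coset_eq (J : 'M[V]_2 -> Prop) (x y : 'M[V]_2) : Prop := J (x - y).

(* pi_p(x) = [[x, x], [x, x]] (before passing to the quotient) *)
Definition pi_rep (x : V) : 'M[V]_2 := mx2 x x x x.

(* pi_p is unital: pi_p(e) = (p ⊕ q) + J_{p⊕q}, the unit of the quotient *)
Definition pi_unital (p : V) : Prop :=
  let q := ounit S - p in coset_eq (Jpq p q) (pi_rep (ounit S)) (dsum p q).

End OpSys.

(* Main.v *)
Require Import Defs.
From HB Require Import structures.
From mathcomp Require Import all_boot all_order all_algebra.
From mathcomp Require Import complex reals.
From mathcomp Require Import ring.
Import Order.TTheory GRing.Theory Num.Theory.
Local Open Scope ring_scope.
Local Open Scope complex_scope.
Set Implicit Arguments. Unset Strict Implicit. Unset Printing Implicit Defensive.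

Section L.
Variables (R : realType) (V : lmodType R[i]) (S : opsys V).

Lemma conj_re (x : R[i]) : x \is Num.real -> x^* = x.
Proof. by move=> /complex_realP [k ->]; rewrite conjc_real. Qed.

Lemma mx2E (a b c d : V) i j : mx2 a b c d i j =
  if i == 0 :> 'I_2 then (if j == 0 :> 'I_2 then a else b)
                 else (if j == 0 :> 'I_2 then c else d).
Proof. by rewrite mxE. Qed.

Lemma mx2D a b c d a' b' c' d' :
  mx2 a b c d + mx2 a' b' c' d' = mx2 (a+a') (b+b') (c+c') (d+d') :> 'M[V]_2.
Proof. apply/matrixP => i j; rewrite !mxE. by case: ifP; case: ifP. Qed.

Lemma mx2B a b c d a' b' c' d' :
  mx2 a b c d - mx2 a' b' c' d' = mx2 (a-a') (b-b') (c-c') (d-d') :> 'M[V]_2.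
Proof. apply/matrixP => i j; rewrite !mxE. by case: ifP; case: ifP. Qed.

Lemma mx2N a b c d : - mx2 a b c d = mx2 (-a) (-b) (-c) (-d) :> 'M[V]_2.
Proof. apply/matrixP => i j; rewrite !mxE. by case: ifP; case: ifP. Qed.

Lemma mx2Z k a b c d : mxZ k (mx2 a b c d) = mx2 (k*:a) (k*:b) (k*:c) (k*:d) :> 'M[V]_2.
Proof. apply/matrixP => i j; rewrite !mxE. by case: ifP; case: ifP. Qed.

Lemma star0 : star S 0 = 0.
Proof. have h := star_add S 0 0; rewrite addr0 in h. by apply: (addrI (star S 0)); rewrite -h addr0. Qed.

Lemma herm2 a b d : star S a = a -> star S b = b -> star S d = d ->
  mxadj (star S) (mx2 a b b d) = mx2 a b b d.
Proof.
move=> ha hb hd; apply/matrixP => i j; rewrite !mxE.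
by case: i => [[|[|//]]] Hi; case: j => [[|[|//]]] Hj.
Qed.

Lemma posherm v : pos S v -> star S v = v.
Proof.
move=> /cone_herm /matrixP /(_ 0 0); rewrite !mxE; by [].
Qed.

Lemma key v (k u0 u1 : R[i]) : pos S v -> 0 <= k -> u0 \is Num.real -> u1 \is Num.real ->
  cone S (mx2 ((k*(u0*u0)) *: v) ((k*(u0*u1)) *: v) ((k*(u0*u1)) *: v) ((k*(u1*u1)) *: v)).
Proof.
move=> hv hk r0 r1.
pose a : 'M[R[i]]_(1,2) := \matrix_(i, j) if j == 0 :> 'I_2 then u0 else u1.
have := cone_scale hk (cone_compat a hv).
congr (cone S _); apply/matrixP => i j; rewrite !mxE !big_ord1 !mxE scalerA.
case: i => [[|[|//]]] Hi; case: j => [[|[|//]]] Hj /=;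
  rewrite ?(conj_Creal r0) ?(conj_Creal r1) ?(mulrC u1) //.
Qed.
Variables (p q : V).
Definition f (a b : R[i]) : V := a *: p + b *: q.
Lemma fp a : a *: p = f a 0. Proof. by rewrite /f scale0r addr0. Qed.
Lemma fq b : b *: q = f 0 b. Proof. by rewrite /f scale0r add0r. Qed.
Lemma fD a b c d : f a b + f c d = f (a + c) (b + d).
Proof. rewrite /f !scalerDl. by rewrite addrACA. Qed.

Lemma starZ (s : R[i]) v : s \is Num.real -> star S v = v -> star S (s *: v) = s *: v.
Proof. by move=> hs hv; rewrite star_scale hv (conj_Creal hs). Qed.

Lemma sig_real (s : R[i]) : s = 1 \/ s = -1 -> s \is Num.real.
Proof. by case=> ->; rewrite ?realN (real1 _). Qed.

Lemma sig_ge (s : R[i]) : s = 1 \/ s = -1 -> 0 <= 1 + s.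
Proof. case=> ->; last by rewrite subrr. by rewrite addr_ge0 ?ler01. Qed.

Lemma C1 (hp : pos S p) (hq : pos S q) s : s = 1 \/ s = -1 ->
  Cpq S p q (mx2 0 (s *: p) (s *: p) (s *: p)).
Proof.
move=> hs; have rs := sig_real hs; have gs := sig_ge hs.
split; first by rewrite herm2 // ?star0 // starZ // posherm.
move=> eps he; exists (eps^-1 + 1); split; first by rewrite addr_gt0 ?invr_gt0.
have re := gtr0_real he; have ne : eps != 0 by rewrite gt_eqF.
have ie : 0 <= eps^-1 by rewrite invr_ge0 ltW.
have te : 0 <= eps^-1 + 1 by rewrite addr_ge0 ?ler01.
have K1 := key (k:=eps^-1) (u0:=eps) (u1:=s) hp ie re rs.
have K2 := key (k:=eps^-1 + 1) (u0:=1) (u1:=0) hq te (real1 _) (real0 _).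
have K3 := key (k:=eps) (u0:=0) (u1:=1) hq (ltW he) (real0 _) (real1 _).
have K4 := key (k:=1 + s) (u0:=0) (u1:=1) hp gs (real0 _) (real1 _).
have := cone_add (cone_add (cone_add K1 K2) K3) K4.
rewrite /dsum !mx2Z !mx2D; congr (cone S (mx2 _ _ _ _));
  rewrite ?scaler0 ?add0r ?addr0 !fp !fq !fD; congr (f _ _); case: hs => hs; subst s; field; exact: ne.
Qed.

Lemma C2 (hp : pos S p) (hq : pos S q) s : s = 1 \/ s = -1 ->
  Cpq S p q (mx2 (s *: q) (s *: q) (s *: q) 0).
Proof.
move=> hs; have rs := sig_real hs; have gs := sig_ge hs.
split; first by rewrite herm2 // ?star0 // starZ // posherm.
move=> eps he; exists (eps^-1 + 1); split; first by rewrite addr_gt0 ?invr_gt0.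
have re := gtr0_real he; have ne : eps != 0 by rewrite gt_eqF.
have ie : 0 <= eps^-1 by rewrite invr_ge0 ltW.
have te : 0 <= eps^-1 + 1 by rewrite addr_ge0 ?ler01.
have K1 := key (k:=eps^-1) (u0:=1) (u1:=s * eps) hq ie (real1 _) (rpredM rs re).
have K2 := key (k:=eps) (u0:=1) (u1:=0) hp (ltW he) (real1 _) (real0 _).
have K3 := key (k:=1 + s) (u0:=1) (u1:=0) hq gs (real1 _) (real0 _).
have K4 := key (k:=eps^-1 + 1) (u0:=0) (u1:=1) hp te (real0 _) (real1 _).
have := cone_add (cone_add (cone_add K1 K2) K3) K4.
rewrite /dsum !mx2Z !mx2D; congr (cone S (mx2 _ _ _ _));
  rewrite ?scaler0 ?add0r ?addr0 !fp !fq !fD; congr (f _ _); case: hs => hs; subst s; field; exact: ne.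
Qed.

Lemma mxZ1 (x : 'M[V]_2) : mxZ 1 x = x.
Proof. by apply/matrixP => i j; rewrite !mxE scale1r. Qed.

Lemma inJ2 x y : Cpq S p q x -> Cpq S p q (- x) -> Cpq S p q y -> Cpq S p q (- y) ->
  Jpq S p q (x + y).
Proof.
move=> h1 h2 h3 h4; exists 2, (fun _ => 1), (fun m => if m == 0 then x else y); split.
  by move=> m; case: ifP.
by rewrite big_ord_recr big_ord1 /= !mxZ1.
Qed.

Lemma inJ x : Cpq S p q x -> Cpq S p q (- x) -> Jpq S p q x.
Proof.
move=> h1 h2; exists 1, (fun _ => 1), (fun _ => x); split => //.
by rewrite big_ord1 mxZ1.
Qed.
End L.

Theorem lemma5p6 (R : realType) (V : lmodType R[i]) (S : opsys V) (p : V) :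
  pos_contraction S p ->
  let q := ounit S - p in
  coset_eq (Jpq S p q) (mx2 p p p p) (mx2 p 0 0 0) /\
  coset_eq (Jpq S p q) (mx2 q q q q) (mx2 0 0 0 q) /\
  pi_unital S p.
Proof.
move=> [hp hq] q.
have Y1 : Cpq S p q (mx2 0 p p p) /\ Cpq S p q (- mx2 0 p p p).
  split; first by have := C1 hp hq (or_introl erefl); rewrite scale1r.
  by have := C1 hp hq (or_intror erefl); rewrite mx2N oppr0 scaleN1r.
have Y2 : Cpq S p q (mx2 q q q 0) /\ Cpq S p q (- mx2 q q q 0).
  split; first by have := C2 hp hq (or_introl erefl); rewrite scale1r.
  by have := C2 hp hq (or_intror erefl); rewrite mx2N oppr0 scaleN1r.
case: Y1 => Y1 Y1'; case: Y2 => Y2 Y2'.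
split; last split.
- by rewrite /coset_eq mx2B subrr !subr0; apply: inJ.
- by rewrite /coset_eq mx2B subrr !subr0; apply: inJ.
rewrite /pi_unital /coset_eq /pi_rep /dsum -/q.
have eq : ounit S = p + q by rewrite /q addrC subrK.
rewrite eq mx2B.
have -> : mx2 (p + q - p) (p + q - 0) (p + q - 0) (p + q - q) = mx2 0 p p p + mx2 q q q 0.
  rewrite mx2D (addrC p q) addrK !subr0 addr0 add0r; congr mx2; by rewrite (addrC q p) addrK.
exact: inJ2.
Qed.
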